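(* Let $a,b\in\mathbb{Q}_3$ be nonzero, with $3$-adic valuations $\gamma(a)$ and $\gamma(b)$ (so $|a|_3=3^{-\gamma(a)}$, $|b|_3=3^{-\gamma(b)}$). Suppose one of the following holds: 1) $\gamma(a)=0$ and $\gamma(b)<0$; 2) $\gamma(a)>0$ and $\gamma(b)>0$; 3) $\gamma(a)>0$ and $\gamma(b)<0$; 4) $\gamma(a)<0$ and $\gamma(b)=0$; 5) $\gamma(a)<0$ and $\gamma(b)>0$. Then the equation $x^3+ax=b$ has no solution $x\in\mathbb{Z}_3^*$.
   Context: $\mathbb{Z}_3^*$ denotes the set of $3$-adic units, i.e. $x\in\mathbb{Q}_3$ with $|x|_3=1$. *)

(* Defs.v *)
From mathcomp Require Import all_boot all_order all_algebra.
Set Implicit Arguments. Unset Strict Implicit. Unset Printing Implicit Defensive.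
Import Order.TTheory GRing.Theory Num.Theory.
Local Open Scope ring_scope.

Definition p3 (n : nat) : int := (3 ^ n)%N%:Z.

(* A 3-adic integer is represented by a coherent sequence of residues:
   x n is (a representative of) x modulo 3^n. *)
Definition Z3 := nat -> int.

Definition is3adic (x : Z3) : Prop :=
  forall n : nat, (x n.+1 == x n %[mod p3 n])%Z.

Definition z3eq (x y : Z3) : Prop :=
  forall n : nat, (x n == y n %[mod p3 n])%Z.

Definition z3add (x y : Z3) : Z3 := fun n => x n + y n.
Definition z3mul (x y : Z3) : Z3 := fun n => x n * y n.
Definition z3const (c : int) : Z3 := fun _ => c.

Definition z3val (x : Z3) (n : nat) : Prop :=
  (p3 n %| x n)%Z /\ ~~ (p3 n.+1 %| x n.+1)%Z.

(* A 3-adic number num / 3^den, with num a 3-adic integer. *)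
Record Q3 := mkQ3 { q3den : nat ; q3num : Z3 }.

Definition isQ3 (a : Q3) : Prop := is3adic (q3num a).

Definition q3eq (a b : Q3) : Prop :=
  z3eq (z3mul (z3const (p3 (q3den b))) (q3num a))
       (z3mul (z3const (p3 (q3den a))) (q3num b)).

Definition q3add (a b : Q3) : Q3 :=
  mkQ3 (q3den a + q3den b)
       (z3add (z3mul (z3const (p3 (q3den b))) (q3num a))
              (z3mul (z3const (p3 (q3den a))) (q3num b))).

Definition q3mul (a b : Q3) : Q3 :=
  mkQ3 (q3den a + q3den b) (z3mul (q3num a) (q3num b)).

Definition q3val (a : Q3) (g : int) : Prop :=
  exists n : nat, z3val (q3num a) n /\ g = n%:Z - (q3den a)%:Z.

Definition q3unit (x : Q3) : Prop := isQ3 x /\ q3val x 0.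

(* Main.v *)
Require Import Defs.
From mathcomp Require Import all_boot all_order all_algebra.
From mathcomp Require Import zify ring.
Import Order.TTheory GRing.Theory Num.Theory.
Local Open Scope ring_scope.

Definition exact3 (k : nat) (y : int) :=
  exists y', y = p3 k * y' /\ ~~ (3 %| y')%Z.

Lemma p3S k : p3 k.+1 = p3 k * 3.
Proof. by rewrite /p3 expnS mulnC PoszM. Qed.

Lemma p3D k l : p3 (k + l) = p3 k * p3 l.
Proof. by rewrite /p3 expnD PoszM. Qed.

Lemma p3_neq0 k : p3 k != 0.
Proof. by rewrite /p3 eqz_nat expn_eq0. Qed.

Lemma p3_dvd k l : (k <= l)%N -> (p3 k %| p3 l)%Z.
Proof. by move=> h; rewrite dvdzE /p3 /= dvdn_exp2l. Qed.

Lemma not3_mul a b : ~~ (3 %| a)%Z -> ~~ (3 %| b)%Z -> ~~ (3 %| a * b)%Z.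
Proof.
rewrite !dvdzE abszM /= => ha hb.
by rewrite (Euclid_dvdM _ _ (isT : prime 3)) negb_or ha hb.
Qed.

Lemma exact_mul k l y z : exact3 k y -> exact3 l z -> exact3 (k + l) (y * z).
Proof.
move=> [y' [-> hy]] [z' [-> hz]]; exists (y' * z'); split; last exact: not3_mul.
by rewrite p3D; ring.
Qed.

Lemma exact_p3 k : exact3 k (p3 k).
Proof. by exists 1; rewrite mulr1. Qed.

Lemma exact_opp k y : exact3 k y -> exact3 k (- y).
Proof. by move=> [y' [-> hy]]; exists (- y'); rewrite mulrN rpredN. Qed.

Lemma exact_eq k l y : k = l -> exact3 k y -> exact3 l y.
Proof. by move=> ->. Qed.

Lemma exact_dvd e k y : (e <= k)%N -> exact3 k y -> (p3 e %| y)%Z.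
Proof. by move=> h [y' [-> _]]; apply: dvdz_mulr; apply: p3_dvd. Qed.

Lemma min3 e f g n t s r : exact3 e t -> exact3 f s -> exact3 g r ->
  (e < f)%N -> (e < g)%N -> (e < n)%N -> (p3 n %| t + s + r)%Z -> False.
Proof.
move=> ht hs hr ef eg en hn.
have h1 : (p3 e.+1 %| t + s + r)%Z := dvdz_trans (p3_dvd _ _ en) hn.
have h2 : (p3 e.+1 %| s)%Z := exact_dvd _ _ _ ef hs.
have h3 : (p3 e.+1 %| r)%Z := exact_dvd _ _ _ eg hr.
have : (p3 e.+1 %| t + s + r - r - s)%Z by rewrite rpredB // rpredB.
have -> : t + s + r - r - s = t by ring.
move: ht => [t' [-> ht]]; rewrite p3S dvdz_mul2l ?p3_neq0 //.
by apply/negP.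
Qed.

Lemma coh (x : Z3) m k : is3adic x -> (p3 m %| x (m + k)%N - x m)%Z.
Proof.
move=> hx; elim: k => [|k IH]; first by rewrite addn0 subrr dvdz0.
have h : (p3 m %| x (m + k).+1 - x (m + k)%N)%Z.
  apply: dvdz_trans (p3_dvd _ _ (leq_addr k m)) _.
  by rewrite -eqz_mod_dvd; apply: hx.
have -> : x (m + k.+1)%N - x m = (x (m + k).+1 - x (m + k)%N) + (x (m + k)%N - x m).
  by rewrite addnS; ring.
by rewrite rpredD.
Qed.

Lemma val_exact (x : Z3) k n : is3adic x -> z3val x k -> (k < n)%N -> exact3 k (x n).
Proof.
move=> hx [h1 h2] kn.
have c1 := coh x k (n - k) hx.
rewrite subnKC in c1; last exact: ltnW.
have c2 := coh x k.+1 (n - k.+1) hx; rewrite subnKC // in c2.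
have d1 : (p3 k %| x n)%Z.
  have -> : x n = (x n - x k) + x k by ring.
  by rewrite rpredD.
exists (x n %/ p3 k)%Z; split; first by rewrite mulrC divzK.
apply/negP => h3.
have d2 : (p3 k.+1 %| x n)%Z.
  rewrite p3S -(divzK d1) [X in (_ %| X)%Z]mulrC dvdz_mul2l //; exact: p3_neq0.
move/negP: h2; apply.
have -> : x k.+1 = x n - (x n - x k.+1) by ring.
by rewrite rpredB.
Qed.

Theorem proposition3p1 (a b : Q3) (ga gb : int)
  (Ha : isQ3 a) (Hb : isQ3 b)
  (Hga : q3val a ga) (Hgb : q3val b gb)
  (Hcases : (ga = 0 /\ gb < 0) \/ (0 < ga /\ 0 < gb) \/ (0 < ga /\ gb < 0) \/
                (ga < 0 /\ gb = 0) \/ (ga < 0 /\ 0 < gb)) :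
  ~ (exists x : Q3,
        q3unit x /\ q3eq (q3add (q3mul x (q3mul x x)) (q3mul a x)) b).
Proof.
move=> [x [[Hx [k [Hk Ek]]] Heq]].
case: Hga => va [Hva Ega]; case: Hgb => vb [Hvb Egb].
case: a Ha Hva Ega Heq => da A /= Ha Hva Ega.
case: b Hb Hvb Egb => db B /= Hb Hvb Egb.
case: x Hx Hk Ek => dx X /= Hx Hk Ek.
have {}Ek : k = dx by lia.
subst k.
set n := (8 * dx + 2 * da + 2 * db + va + vb).+1.
move=> /(_ n); rewrite /= eqz_mod_dvd.
have eX := val_exact X dx n Hx Hk ltac:(lia).
have eA := val_exact A va n Ha Hva ltac:(lia).
have eB := val_exact B vb n Hb Hvb ltac:(lia).
set Xn := X n; set An := A n; set Bn := B n.
move=> H.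
rewrite /z3mul /z3add /z3const -/Xn -/An -/Bn in H.
have e1 : exact3 (db + ((da + dx) + (dx + (dx + dx)))) (p3 db * (p3 (da + dx) * (Xn * (Xn * Xn)))).
  apply: exact_mul; first exact: exact_p3.
  apply: exact_mul; first exact: exact_p3.
  by apply: exact_mul => //; apply: exact_mul.
have e2 : exact3 (db + ((dx + (dx + dx)) + (va + dx))) (p3 db * (p3 (dx + (dx + dx)) * (An * Xn))).
  apply: exact_mul; first exact: exact_p3.
  apply: exact_mul; first exact: exact_p3.
  exact: exact_mul.
have e3 : exact3 ((dx + (dx + dx) + (da + dx)) + vb) (- (p3 (dx + (dx + dx) + (da + dx)) * Bn)).
  by apply: exact_opp; apply: exact_mul => //; exact: exact_p3.
set T1 := p3 db * (p3 (da + dx) * (Xn * (Xn * Xn))) in e1.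
set T2 := p3 db * (p3 (dx + (dx + dx)) * (An * Xn)) in e2.
set T3 := - (p3 (dx + (dx + dx) + (da + dx)) * Bn) in e3.
have {}H : (p3 n %| T1 + T2 + T3)%Z.
  have <- : p3 db * (p3 (da + dx) * (Xn * (Xn * Xn)) + p3 (dx + (dx + dx)) * (An * Xn)) -
    p3 (dx + (dx + dx) + (da + dx)) * Bn = T1 + T2 + T3.
    by rewrite /T1 /T2 /T3; ring.
  exact: H.
have H312 : (p3 n %| T3 + T1 + T2)%Z by have -> : T3 + T1 + T2 = T1 + T2 + T3 by ring.
have H213 : (p3 n %| T2 + T1 + T3)%Z by have -> : T2 + T1 + T3 = T1 + T2 + T3 by ring.
rewrite Ega Egb in Hcases.
case: Hcases => [[c1 c2]|[[c1 c2]|[[c1 c2]|[[c1 c2]|[c1 c2]]]]].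
- by apply: (min3 _ _ _ n _ _ _ e3 e1 e2) => //; lia.
- by apply: (min3 _ _ _ n _ _ _ e1 e2 e3) => //; lia.
- by apply: (min3 _ _ _ n _ _ _ e3 e1 e2) => //; lia.
- by apply: (min3 _ _ _ n _ _ _ e2 e1 e3) => //; lia.
- by apply: (min3 _ _ _ n _ _ _ e2 e1 e3) => //; lia.
Qed.
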